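(* Let $\mathbf A\in\mathbb C^{n\times n}$ with $\operatorname{Ind}\mathbf A=k$ and $\operatorname{rank}\mathbf A^{k+1}=\operatorname{rank}\mathbf A^{k}=r\le n$. Then $\mathbf A^{D}\mathbf A=(p_{ij})$ satisfies, for all $i,j=1,\dots,n$, \[p_{ij}=\frac{\sum_{\beta\in J_{r,n}\{i\}}\left|\left(\mathbf A^{k+1}_{.i}(\mathbf a^{(k+1)}_{.j})\right)^{\beta}_{\beta}\right|}{\sum_{\beta\in J_{r,n}}\left|(\mathbf A^{k+1})^{\beta}_{\beta}\right|},\] where $\mathbf a^{(k+1)}_{.j}$ is the $j$-th column of $\mathbf A^{k+1}$.
   Context: $\operatorname{Ind}\mathbf A$ is the smallest nonnegative $k$ with $\operatorname{rank}\mathbf A^{k+1}=\operatorname{rank}\mathbf A^{k}$; the Drazin inverse $\mathbf A^{D}$ is the unique $\mathbf X$ with $\mathbf A^{k+1}\mathbf X=\mathbf A^{k}$, $\mathbf X\mathbf A\mathbf X=\mathbf X$, $\mathbf A\mathbf X=\mathbf X\mathbf A$. $\mathbf M_{.i}(\mathbf c)$ denotes $\mathbf M$ with its $i$-th column replaced by $\mathbf c$. $J_{r,n}$ is the set of strictly increasing sequences of $r$ elements of $\{1,\dots,n\}$, $J_{r,n}\{i\}=\{\beta\in J_{r,n}:i\in\beta\}$, $\mathbf M^{\beta}_{\beta}$ is the principal submatrix indexed by $\beta$, $|\cdot|$ is the determinant. *)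

(* Defs.v *)
From mathcomp Require Import all_boot all_order all_algebra.
From mathcomp Require Export complex.
Set Implicit Arguments. Unset Strict Implicit. Unset Printing Implicit Defensive.
Import GRing.Theory Num.Theory.
Local Open Scope ring_scope.

Definition is_mx_index (F : fieldType) (n : nat) (A : 'M[F]_n) (k : nat) : Prop :=
  \rank (A ^+ k.+1) = \rank (A ^+ k) /\
  (forall m, (m < k)%N -> \rank (A ^+ m.+1) <> \rank (A ^+ m)).

Definition is_drazin (F : fieldType) (n : nat) (A X : 'M[F]_n) (k : nat) : Prop :=
  A ^+ k.+1 *m X = A ^+ k /\ X *m A *m X = X /\ A *m X = X *m A.

Definition col_replace (F : fieldType) (n : nat) (M : 'M[F]_n) (i : 'I_n)
  (c : 'cV[F]_n) : 'M[F]_n :=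
  \matrix_(p, q) (if q == i then c p 0 else M p q).

Definition pminor (F : fieldType) (n : nat) (M : 'M[F]_n) (b : {set 'I_n}) : F :=
  \det (\matrix_(p < #|b|, q < #|b|)
          M (@enum_val _ (mem b) p) (@enum_val _ (mem b) q)).

(* Main.v *)
Require Import Defs.
From mathcomp Require Import all_boot all_order all_algebra.
From mathcomp Require Import complex.
From mathcomp Require Import fingroup perm zify ring.
Import GRing.Theory Num.Theory.
Set Implicit Arguments. Unset Strict Implicit. Unset Printing Implicit Defensive.
Local Open Scope ring_scope.


Lemma det_conj_perm (Rg : comNzRingType) n (s : 'S_n) (A : 'M[Rg]_n) :
  \det (\matrix_(p, q) A (s p) (s q)) = \det A.
Proof.
have -> : \matrix_(p, q) A (s p) (s q) = row_perm s (col_perm s A).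
  by apply/matrixP => p q; rewrite !mxE.
rewrite row_permE col_permE !det_mulmx !det_perm odd_permV.
by rewrite mulrCA -signr_addb addbb expr0 mulr1.
Qed.

Lemma det_lastid (Rg : comNzRingType) n m (A : 'M[Rg]_n) (hm : (m <= n)%N) :
  (forall p q : 'I_n, (m <= p)%N -> A p q = (p == q)%:R) ->
  \det A = \det (\matrix_(p < m, q < m) A (widen_ord hm p) (widen_ord hm q)).
Proof.
elim: n A m hm => [|n IH] A m hm H.
  have e : m = 0%N by apply/eqP; rewrite -leqn0.
  by subst m; rewrite !det_mx00.
have [e|hlt] := eqVneq m n.+1.
  subst m; congr (\det _); apply/matrixP => p q; rewrite !mxE.
  by congr (A _ _); apply/val_inj.
have hm' : (m <= n)%N by rewrite -ltnS ltn_neqAle hlt hm.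
rewrite (expand_det_row _ ord_max) (bigD1 ord_max) //= big1 ?addr0; last first.
  by move=> j hj; rewrite H ?leq_ord // eq_sym (negbTE hj) mul0r.
rewrite H // eqxx mul1r /cofactor addnn -signr_odd odd_double expr0 mul1r.
rewrite (IH _ m hm'); last first.
  move=> p q hp; rewrite !mxE H ?lift_max //.
  by rewrite (inj_eq (@lift_inj _ ord_max)).
congr (\det _); apply/matrixP => p q; rewrite !mxE; congr (A _ _); apply/val_inj;
  exact: lift_max.
Qed.



Definition extmx (Rg : comNzRingType) n (N : 'M[Rg]_n) (S : {set 'I_n}) : 'M[Rg]_n :=
  \matrix_(p, q) if (p \in S) && (q \in S) then N p q else (p == q)%:R.

Section Perm.
Variables (n : nat) (S : {set 'I_n}).
Let s := enum S ++ enum (~: S).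
Lemma size_s : size s = n.
Proof. by rewrite size_cat -!cardE cardsC card_ord. Qed.
Lemma uniq_s : uniq s.
Proof.
rewrite cat_uniq !enum_uniq andbT /=; apply/hasPn => x.
by rewrite !mem_enum inE => /negPf ->.
Qed.
Definition hfun (p : 'I_n) : 'I_n := nth p s p.
Lemma hfun_inj : injective hfun.
Proof.
move=> p q; rewrite /hfun (set_nth_default p q) ?size_s //.
move/eqP; rewrite nth_uniq ?size_s ?uniq_s // => /eqP; exact: val_inj.
Qed.
Definition hperm : 'S_n := perm hfun_inj.
Lemma hperm_lo (p : 'I_#|S|) (hm : (#|S| <= n)%N) :
  hperm (widen_ord hm p) = @enum_val _ (mem S) p.
Proof.
rewrite permE /hfun /= nth_cat -cardE ltn_ord /enum_val.
by apply: set_nth_default; rewrite -cardE.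
Qed.
Lemma hperm_hi (p : 'I_n) : (#|S| <= p)%N -> hperm p \notin S.
Proof.
move=> hp; rewrite permE /hfun nth_cat -cardE ltnNge hp /=.
suff : nth p (enum (~: S)) (p - #|S|) \in enum (~: S) by rewrite mem_enum inE.
apply: mem_nth; rewrite -cardE -(ltn_add2l #|S|) subnKC // cardsC card_ord.
exact: ltn_ord.
Qed.
End Perm.

Lemma pminor_ext (Rg : fieldType) n (N : 'M[Rg]_n) (S : {set 'I_n}) :
  pminor N S = \det (extmx N S).
Proof.
have hm : (#|S| <= n)%N by rewrite -[X in (_ <= X)%N](card_ord n) max_card.
rewrite -(det_conj_perm (hperm S)) (det_lastid hm); last first.
  move=> p q hp; rewrite !mxE (negbTE (hperm_hi hp)) /=.
  by rewrite (inj_eq (@perm_inj _ _)).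
rewrite /pminor; congr (\det _); apply/matrixP => p q; rewrite !mxE !hperm_lo.
by rewrite !enum_valP.
Qed.



Lemma det_diag_add (Rg : comNzRingType) n (d : 'I_n -> Rg) (N : 'M[Rg]_n) :
  \det (\matrix_(p, q) (N p q + (p == q)%:R * d p)) =
  \sum_(S : {set 'I_n}) (\prod_(l in ~: S) d l) * \det (extmx N S).
Proof.
rewrite /determinant.
transitivity (\sum_(s : 'S_n) \sum_(S : {set 'I_n}) (-1) ^+ s *
   \prod_i (if i \in S then N i (s i) else (i == s i)%:R * d i)).
  apply: eq_bigr => s _; rewrite -mulr_sumr; congr (_ * _).
  rewrite (eq_bigr (fun i => N i (s i) + (i == s i)%:R * d i)) ?bigA_distr //.
  by move=> i _; rewrite mxE.
rewrite exchange_big; apply: eq_bigr => S _.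
rewrite mulr_sumr; apply: eq_bigr => s _.
rewrite mulrCA; congr (_ * _).
have [hf|hnf] := boolP [forall i, (i \notin S) ==> (s i == i)].
  have hsS i : i \in S -> s i \in S.
    move=> hi; apply/negPn/negP => hsi; move/forallP: hf => /(_ (s i)).
    rewrite hsi /= => /eqP /perm_inj e; by move: hsi; rewrite e hi.
  rewrite (bigID (mem S)) [X in _ = _ * X](bigID (mem S)) /=.
  rewrite [X in _ = _ * (_ * X)]big1; last first.
    by move=> i hi; rewrite mxE (negbTE hi) /= eq_sym (eqP (implyP (forallP hf i) hi)) eqxx.
  rewrite mulr1 mulrC; congr (_ * _); last first.
    by apply: eq_bigr => i hi; rewrite mxE hi hsS.
  rewrite [RHS](eq_bigl (fun i => i \notin S)); last by move=> i; rewrite inE.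
  apply: eq_bigr => i hi; rewrite (negbTE hi) eq_sym (eqP (implyP (forallP hf i) hi)).
  by rewrite eqxx mul1r.
move: hnf; rewrite negb_forall => /existsP [i0]; rewrite negb_imply => /andP [hi0 hs0].
rewrite (bigD1 i0) //= [X in _ = _ * X](bigD1 i0) //= !mxE (negbTE hi0) /=.
by rewrite eq_sym (negbTE hs0) !mul0r mulr0.
Qed.



Lemma pminor_rank (F : fieldType) n (N : 'M[F]_n) (S : {set 'I_n}) :
  (\rank N < #|S|)%N -> pminor N S = 0.
Proof.
move=> hr; rewrite /pminor.
set f := @enum_val _ (mem S).
set M0 := \matrix_(p, q) _.
have eM : M0 = rowsub f N *m colsub f 1%:M.
  by rewrite -mxsub_mul mulmx1; apply/matrixP => p q; rewrite !mxE.
have hM : (\rank M0 < #|S|)%N.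
  apply: leq_ltn_trans hr; rewrite eM; apply: leq_trans (mxrankM_maxl _ _) _.
  by rewrite rowsubE; exact: mxrankM_maxr.
apply/eqP; apply: contraTT hM => hd.
by rewrite mxrank_unit ?ltnn // unitmxE unitfE.
Qed.



Lemma extmx_scale (Rg : comNzRingType) n (a : Rg) (N : 'M[Rg]_n) S :
  \det (extmx (a *: N) S) = a ^+ #|S| * \det (extmx N S).
Proof.
have -> : extmx (a *: N) S =
    diag_mx (\row_l (if l \in S then a else 1)) *m extmx N S.
  rewrite mul_diag_mx; apply/matrixP => p q; rewrite !mxE.
  case: (boolP (p \in S)) => hp; case: (boolP (q \in S)) => hq //=;
    rewrite ?mul1r //.
  by rewrite (_ : (p == q) = false) ?mulr0 //; apply/eqP => e; move: hq; rewrite -e hp.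
rewrite (det_mulmx (diag_mx _)) det_diag; congr (_ * _).
rewrite (eq_bigr (fun l => if l \in S then a else 1)); last by move=> l _; rewrite mxE.
by rewrite -big_mkcond prodr_const.
Qed.

Lemma extmx_mapC (F : fieldType) n (N : 'M[F]_n) S :
  \det (extmx (map_mx polyC N) S) = (pminor N S)%:P.
Proof.
rewrite pminor_ext -det_map_mx; congr (\det _); apply/matrixP => p q.
rewrite !mxE; case: ifP => // _; by rewrite rmorph_nat.
Qed.

Lemma card_compl n (S : {set 'I_n}) : (#|S| + #|~: S|)%N = n.
Proof. by rewrite cardsC card_ord. Qed.

Lemma vdiv (F : fieldType) n (N : 'M[F]_n) : exists q,
  \det (\matrix_(p, q) (((1 - 'X) *: map_mx polyC N) p q + (p == q)%:R * 'X))
  = 'X^(n - \rank N) * q.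
Proof.
set rho := \rank N.
have hrho : (rho <= n)%N by apply: rank_leq_row.
exists (\sum_(S : {set 'I_n}) if (#|S| <= rho)%N then
   'X^(rho - #|S|) * ((1 - 'X) ^+ #|S| * (pminor N S)%:P) else 0).
rewrite (det_diag_add (fun _ => 'X)) mulr_sumr; apply: eq_bigr => S _.
rewrite prodr_const extmx_scale extmx_mapC.
have hc := card_compl S.
case: leqP => hS.
  rewrite [RHS]mulrA -exprD; congr (_ ^+ _ * _); lia.
by rewrite pminor_rank // polyC0 !mulr0.
Qed.



Lemma det_colrep (Rg : comNzRingType) n (M : 'M[Rg]_n) i (c : 'cV_n) :
  \det (\matrix_(p, q) if q == i then c p 0 else M p q) = (\adj M *m c) i 0.
Proof.
rewrite (expand_det_col _ i) !mxE; apply: eq_bigr => l _.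
rewrite !mxE eqxx mulrC; congr (_ * _).
rewrite /cofactor; congr (_ * \det _); apply/matrixP => p q; rewrite !mxE.
by rewrite eq_sym (negbTE (neq_lift _ _)).
Qed.

Lemma coef_sum_X (F : fieldType) n r (N : 'M[F]_n) (P : pred {set 'I_n}) :
  (r <= n)%N ->
  (\sum_(S : {set 'I_n}) ((if P S then 'X ^+ #|~: S| else 0) * (pminor N S)%:P))`_(n - r)
  = \sum_(S : {set 'I_n} | (#|S| == r) && P S) pminor N S.
Proof.
move=> hr; rewrite coef_sum [RHS]big_mkcond; apply: eq_bigr => S _.
have hc := card_compl S.
case: (P S); last by rewrite mul0r coef0 andbF.
rewrite mulrC coefCM coefXn andbT.
have -> : ((n - r)%N == #|~: S|) = (#|S| == r) by apply/eqP/eqP; lia.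
by case: (_ == _); rewrite ?mulr1 ?mulr0.
Qed.

Lemma detM_coef (F : fieldType) n r (N : 'M[F]_n) : (r <= n)%N ->
  (\det (\matrix_(p, q) ((map_mx polyC N) p q + (p == q)%:R * 'X)))`_(n - r)
  = \sum_(S : {set 'I_n} | #|S| == r) pminor N S.
Proof.
move=> hr; rewrite (det_diag_add (fun _ => 'X)).
have e : \sum_(S : {set 'I_n} | #|S| == r) pminor N S =
   \sum_(S : {set 'I_n} | (#|S| == r) && predT S) pminor N S.
  by apply: eq_bigl => S /=; rewrite andbT.
rewrite e -(coef_sum_X N predT hr); apply: (congr1 (fun p : {poly F} => p`_(n - r))); apply: eq_bigr => S _.
by rewrite prodr_const extmx_mapC.
Qed.

Lemma detMi_coef (F : fieldType) n r (N : 'M[F]_n) i : (r <= n)%N ->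
  (\det (\matrix_(p, q) ((map_mx polyC N) p q +
      (p == q)%:R * (if p == i then 0 else 'X))))`_(n - r)
  = \sum_(S : {set 'I_n} | (#|S| == r) && (i \in S)) pminor N S.
Proof.
move=> hr; rewrite (det_diag_add (fun p => if p == i then 0 else 'X)).
rewrite -(coef_sum_X N (fun S => i \in S) hr).
apply: (congr1 (fun p : {poly F} => p`_(n - r))); apply: eq_bigr => S _.
rewrite extmx_mapC; congr (_ * _).
case: (boolP (i \in S)) => hi.
  rewrite -prodr_const; apply: eq_bigr => l hl.
  have -> : (l == i) = false by apply/negP => /eqP e; move: hl; rewrite e inE hi.
  by [].
by rewrite (bigD1 i) ?inE //= eqxx mul0r.
Qed.



Section Idem.
Variables (K : comNzRingType) (M : algType K) (Q Bq : M) (x : K).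
Hypotheses (hQQ : Q * Q = Q) (hQB : Q * Bq = Bq) (hBQ : Bq * Q = Bq).

Lemma idem_CQ : (1 - Q) * Q = 0.
Proof. by rewrite mulrBl mul1r hQQ subrr. Qed.
Lemma idem_QC : Q * (1 - Q) = 0.
Proof. by rewrite mulrBr mulr1 hQQ subrr. Qed.
Lemma idem_CC : (1 - Q) * (1 - Q) = 1 - Q.
Proof. by rewrite mulrBr mulr1 idem_CQ subr0. Qed.
Lemma idem_CB : (1 - Q) * Bq = 0.
Proof. by rewrite mulrBl mul1r hQB subrr. Qed.
Lemma idem_BC : Bq * (1 - Q) = 0.
Proof. by rewrite mulrBr mulr1 hBQ subrr. Qed.

Lemma idem_I1 : (Q + x *: (1 - Q)) * (x *: Q + Bq + (1 - Q)) = x%:A + Bq.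
Proof.
rewrite mulrDl -scalerAl (mulrDr Q (x *: Q + Bq)) (mulrDr Q (x *: Q)).
rewrite (mulrDr (1 - Q) (x *: Q + Bq)) (mulrDr (1 - Q) (x *: Q)) -!scalerAr.
rewrite hQQ hQB idem_QC idem_CQ idem_CB idem_CC.
by rewrite scaler0 !addr0 add0r -addrA [Bq + _]addrC addrA -scalerDr [Q + _]addrC subrK.
Qed.

Lemma idem_I2 : (Q + x *: (1 - Q)) * ((1 - Q) + x *: Q) = x%:A.
Proof.
rewrite mulrDl -scalerAl (mulrDr Q (1 - Q)) (mulrDr (1 - Q) (1 - Q)) -!scalerAr.
rewrite hQQ idem_QC idem_CQ idem_CC.
by rewrite !scaler0 addr0 add0r -scalerDr [Q + _]addrC subrK.
Qed.

Lemma idem_I3 : (Q + x *: (1 - Q)) * Q = Q.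
Proof. by rewrite mulrDl -scalerAl hQQ idem_CQ scaler0 addr0. Qed.

Lemma idem_I4 (Y : M) : Bq * Y = Q -> Y * Q = Q * Y ->
  (Bq + (1 - Q)) * (Y * Q + (1 - Q)) = 1.
Proof.
move=> hBY hYQ.
have hCYQ : (1 - Q) * (Y * Q) = 0.
  by rewrite mulrBl mul1r mulrA -hYQ -mulrA hQQ subrr.
rewrite mulrDl (mulrDr Bq) (mulrDr (1 - Q)) mulrA hBY hQQ idem_BC hCYQ idem_CC.
by rewrite addr0 add0r [Q + _]addrC subrK.
Qed.
End Idem.



Lemma main_thm (F : fieldType) n' r k (A X : 'M[F]_n'.+1) :
  \rank (A ^+ k.+1) = r -> (r <= n'.+1)%N -> is_drazin A X k ->
  forall i j : 'I_n'.+1,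
    (X *m A) i j =
      (\sum_(b : {set 'I_n'.+1} | (#|b| == r) && (i \in b))
          pminor (col_replace (A ^+ k.+1) i (col j (A ^+ k.+1))) b)
      / (\sum_(b : {set 'I_n'.+1} | #|b| == r) pminor (A ^+ k.+1) b).
Proof.
move=> hr hrn [hD1 [hD2 hD3]] i j.
rewrite !mulmxE in hD1 hD2 hD3 *.
set n := n'.+1.
set B := A ^+ k.+1 in hr hD1 *.
set P := X * A in hD2 hD3 *.
have hAX : A * X = P by [].
have cXA : GRing.comm X A by [].
have hPP : P * P = P by rewrite /P mulrA hD2.
have hBP : B * P = B by rewrite /P mulrA hD1 -exprSr.
have hPB : P * B = B.
  rewrite /P -mulrA -exprS (commrX _ cXA) exprS -mulrA hD1 -exprS //.
have hBY : B * X ^+ k.+1 = P.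
  rewrite /B; elim: k {hr hD1 hBP hPB B} => [|m IH]; first by rewrite !expr1.
  rewrite (exprS A m.+1) (exprSr X m.+1) mulrA -(mulrA A) IH /P !mulrA.
  by rewrite -(mulrA (A * X)) hAX hPP.
have cXP : GRing.comm X P by rewrite /GRing.comm /P -mulrA hAX.
have hYP : X ^+ k.+1 * P = P * X ^+ k.+1 by rewrite (commrX k.+1 (commr_sym cXP)).
have hE := idem_I4 hPP hBP hBY hYP.
have hdetE : \det (B + (1 - P)) != 0.
  apply/negP => /eqP h0; have := congr1 (fun M => \det M) hE; rewrite detM h0 mul0r det1.
  by move/eqP; rewrite eq_sym oner_eq0.
have hrP : \rank P = r.
  apply/eqP; rewrite eqn_leq; apply/andP; split.
    by rewrite -hr -hBY -mulmxE; exact: mxrankM_maxl.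
  by have := mxrankM_maxl P B; rewrite mulmxE hPB hr.
have hrC : (\rank (1 - P)%R <= n - r)%N.
  have h0 : P *m (1 - P) = 0 by rewrite mulmxE idem_QC.
  have hs : (P <= kermx (1 - P))%MS by apply/sub_kermxP.
  have := mxrankS hs; rewrite mxrank_ker hrP.
  have := rank_leq_row (1 - P)%R; lia.
set Bp := map_mx (@polyC F) B.
set Pp := map_mx (@polyC F) P.
have hPPp : Pp * Pp = Pp by rewrite -rmorphM hPP.
have hPBp : Pp * Bp = Bp by rewrite -rmorphM hPB.
have hBPp : Bp * Pp = Bp by rewrite -rmorphM hBP.
set V := Pp + 'X *: (1 - Pp).
set W := 'X *: Pp + Bp + (1 - Pp).
set Vt := (1 - Pp) + 'X *: Pp.
set Mm := 'X%:A + Bp.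
have hVW : V * W = Mm := @idem_I1 _ _ Pp Bp 'X hPPp hPBp.
have hVVt : V * Vt = 'X%:A := @idem_I2 _ _ Pp 'X hPPp.
have hVP : V * Pp = Pp := @idem_I3 _ _ Pp 'X hPPp.
have hMm : \matrix_(p, q) (Bp p q + (p == q)%:R * 'X) = Mm.
  apply/matrixP => p q; rewrite !mxE.
  by rewrite addrC mulrC.
have hV : \matrix_(p, q) (((1 - 'X) *: map_mx (@polyC F) P) p q + (p == q)%:R * 'X) = V.
  apply/matrixP => p q; rewrite !mxE; ring.
have hVt : \matrix_(p, q) (((1 - 'X) *: map_mx (@polyC F) (1 - P)) p q + (p == q)%:R * 'X) = Vt.
  by apply/matrixP => p q; rewrite !mxE rmorphB rmorph_nat /=; ring.
have [q1 hq1] := vdiv P; rewrite hV hrP in hq1.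
have [q2 hq2] := vdiv (1 - P); rewrite hVt in hq2.
have hvvt : \det V * \det Vt = 'X^n by rewrite -detM hVVt detZ det1 mulr1.
have hq10 : q1`_0 != 0.
  set m2 := (n - \rank (1 - P)%R)%N in hq2.
  have hm2 : (r <= m2)%N by rewrite /m2; lia.
  have h : 'X^n * (q1 * ('X^(m2 - r) * q2)) = 'X^n * 1.
    have e1 : 'X^m2 = 'X^r * 'X^(m2 - r) :> {poly F} by rewrite -exprD subnKC.
    have e2 : 'X^n = 'X^(n - r) * 'X^r :> {poly F} by rewrite -exprD subnK.
    rewrite mulr1 -[in RHS]hvvt hq1 hq2 e1 e2; ring.
  move/mulfI: h => /(_ _) h; have {h} h := h (expf_neq0 _ (negbT (polyX_eq0 _))).
  have := congr1 (fun p : {poly F} => p`_0) h; rewrite /= coef0M coef1.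
  move=> e; apply/eqP => h0; move: e; rewrite h0 mul0r => /eqP.
  by rewrite eq_sym oner_eq0.
have hw0 : (\det W)`_0 != 0.
  rewrite -horner_coef0.
  have -> : (\det W).[0] = horner_eval 0 (\det W) by [].
  rewrite -det_map_mx.
  have -> : map_mx (horner_eval 0) W = B + (1 - P).
    apply/matrixP => p q; rewrite !mxE /horner_eval.
    rewrite !(hornerE, hornerMn).
    by rewrite /= -addrA.
  by [].
have hdetMm : \det Mm = \det V * \det W by rewrite -hVW detM.
have hDen : \sum_(b : {set 'I_n'.+1} | #|b| == r) pminor B b = (\det Mm)`_(n - r).
  by rewrite -hMm detM_coef.
have hDen0 : (\det Mm)`_(n - r) != 0.
  by rewrite hdetMm hq1 -mulrA coefXnM ltnn subnn coef0M mulf_neq0.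
set Ci := col_replace B i (col j B).
have hNum : \sum_(b : {set 'I_n'.+1} | (#|b| == r) && (i \in b)) pminor Ci b =
  (\det (\matrix_(p, q) ((map_mx (@polyC F) Ci) p q +
      (p == q)%:R * (if p == i then 0 else 'X))))`_(n - r).
  by rewrite detMi_coef.
have hMi : \matrix_(p, q) ((map_mx (@polyC F) Ci) p q +
      (p == q)%:R * (if p == i then 0 else 'X)) =
    \matrix_(p, q) (if q == i then (col j Bp) p 0 else Mm p q).
  apply/matrixP => p q; rewrite !mxE.
  have [->|hq] := eqVneq q i.
    by case: (p == i); rewrite ?mulr0 ?mul0r addr0.
  have [e|hpq] := eqVneq p q.
    by rewrite -e in hq *; rewrite (negbTE hq) mul1r mulr1 addrC.
  by rewrite !mul0r mulr0 addr0 add0r.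
rewrite hDen hNum hMi det_colrep.
have -> : (\adj Mm *m col j Bp) i 0 = (\adj Mm * Bp) i j.
  by rewrite -mulmxE !mxE; apply: eq_bigr => l _; rewrite !mxE.
have hwne : \det W != 0 by apply: contraNneq hw0 => ->; rewrite coef0.
have hadjV : \adj Mm * V = \det V *: \adj W.
  have h1 : (\adj Mm * V - \det V *: \adj W) * W = 0.
    rewrite mulrBl -mulrA hVW -scalerAl -!mulmxE !mul_adj_mx hdetMm.
    by rewrite scale_scalar_mx subrr.
  have h2 : \det W *: (\adj Mm * V - \det V *: \adj W) = 0.
    by rewrite -mul_mx_scalar -(mul_mx_adj W) mulmxA mulmxE h1 -mulmxE mul0mx.
  by move/eqP: h2; rewrite scalemx_eq0 (negbTE hwne) /= subr_eq0 => /eqP.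
have hMP : Mm * Pp = 'X *: Pp + Bp by rewrite mulrDl hBPp mulr_algl.
have hadjB : \adj Mm * Bp = \det Mm *: Pp - 'X *: (\det V *: (\adj W * Pp)).
  have eB : Bp = Mm * Pp - 'X *: Pp by rewrite hMP [_ + Bp]addrC addrK.
  have hAM : \adj Mm * Mm = (\det Mm)%:M by rewrite -mulmxE mul_adj_mx.
  have hSP : (\det Mm)%:M * Pp = \det Mm *: Pp by rewrite -mulmxE mul_scalar_mx.
  rewrite {1}eB mulrBr mulrA hAM hSP -scalerAr -{2}hVP mulrA hadjV -scalerAl.
  by [].
have hentry : (\adj Mm * Bp) i j =
    \det Mm * (P i j)%:P - 'X * (\det V * (\adj W * Pp) i j).
  by rewrite hadjB !mxE.
have h0 : ('X * (\det V * (\adj W * Pp) i j))`_(n - r) = 0.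
  by rewrite hq1 !mulrA -exprS -!mulrA coefXnM ltnSn.
rewrite hentry coefB h0 subr0 coefMC mulrC mulKf //.
Qed.

Theorem corollary2p6 (R : rcfType) (n k r : nat) (A X : 'M[R[i]]_n) :
  is_mx_index A k ->
  \rank (A ^+ k.+1) = r -> \rank (A ^+ k) = r -> (r <= n)%N ->
  is_drazin A X k ->
  forall i j : 'I_n,
    (X *m A) i j =
      (\sum_(b : {set 'I_n} | (#|b| == r) && (i \in b))
          pminor (col_replace (A ^+ k.+1) i (col j (A ^+ k.+1))) b)
      / (\sum_(b : {set 'I_n} | #|b| == r) pminor (A ^+ k.+1) b).
Proof.
move=> _ hr _ hrn hD i j; move: A X hr hrn hD i j.
case: n => [|n'] A X hr hrn hD i j; first by case: i.
exact: main_thm.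
Qed.
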